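(* Assume (A3) and (A4), and let $\rho\in[0,\epsilon]$. Then for all $x\in R\mathbb{B}$, $$\mathrm{dist}(x,\mathcal{X}_\rho)\le\frac{1}{\sigma}[g(x)+\rho]_+ .$$
   Context: Let $g:\mathbb{R}^d\to\mathbb{R}$ be convex with subdifferential $\partial g(x)$. Let $R>0$ and $\mathbb{B}=\{x\in\mathbb{R}^d:\|x\|\le1\}$, with $\|\cdot\|$ the Euclidean norm. Set $\mathcal{X}=\{x:g(x)\le0\}$ and assume $\mathcal{X}\subseteq R\mathbb{B}$. For $\rho\ge0$ set $\mathcal{X}_\rho=\{x:g(x)\le-\rho\}$. Write $\mathrm{dist}(z,\mathcal{Y})=\min_{y\in\mathcal{Y}}\|z-y\|$ and $[a]_+=\max(a,0)$. Assumptions: (A3) there is $G_g>0$ with $\|s\|\le G_g$ for all $s\in\partial g(x)$ and all $x\in R\mathbb{B}$; (A4) there are $\sigma,\epsilon>0$ such that $\{x:g(x)=-\epsilon\}$ is nonempty and $\|s\|\ge\sigma$ for all $s\in\partial g(x)$ whenever $g(x)=-\epsilon$. *)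

(* Defs.v *)
From HB Require Import structures.
From mathcomp Require Import all_boot all_order all_algebra.
From mathcomp Require Import all_classical all_reals.
Set Implicit Arguments. Unset Strict Implicit. Unset Printing Implicit Defensive.
Import Order.TTheory GRing.Theory Num.Theory.
Local Open Scope ring_scope.
Local Open Scope classical_set_scope.

Section Defs.
Variables (R : realType) (d : nat).

Definition dotp (u v : 'rV[R]_d) : R := \sum_(i < d) u ord0 i * v ord0 i.
Definition enorm (u : 'rV[R]_d) : R := Num.sqrt (dotp u u).

Definition convex_fun (g : 'rV[R]_d -> R) : Prop :=
  forall (x y : 'rV[R]_d) (t : R), 0 <= t -> t <= 1 ->
    g (t *: x + (1 - t) *: y) <= t * g x + (1 - t) * g y.

Definition subgrad (g : 'rV[R]_d -> R) (x s : 'rV[R]_d) : Prop :=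
  forall y : 'rV[R]_d, g x + dotp s (y - x) <= g y.

Definition sublevel (g : 'rV[R]_d -> R) (rho : R) : set 'rV[R]_d :=
  [set x | g x <= - rho].

(* Euclidean distance from z to a set Y (infimum; attained for closed nonempty Y) *)
Definition dist (z : 'rV[R]_d) (Y : set 'rV[R]_d) : R :=
  inf [set enorm (z - y) | y in Y].

End Defs.

(* Main.v *)
Require Import Defs.
From HB Require Import structures.
From mathcomp Require Import all_boot all_order all_algebra.
From mathcomp Require Import all_classical all_reals.
From mathcomp Require Import topology normedtype derive.
From mathcomp Require Import ring lra.
Import Order.TTheory GRing.Theory Num.Theory.
Local Open Scope ring_scope.
Set Implicit Arguments. Unset Strict Implicit.
Local Open Scope classical_set_scope. Local Open Scope ring_scope.

Section Dot.
Variables (R : realType) (d : nat).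
Implicit Types u v w : 'rV[R]_d.

Lemma dotpC u v : dotp u v = dotp v u.
Proof. by apply: eq_bigr => i _; rewrite mulrC. Qed.

Lemma dotpDl u v w : dotp (u + v) w = dotp u w + dotp v w.
Proof. by rewrite /dotp -big_split; apply: eq_bigr => i _; rewrite !mxE mulrDl. Qed.

Lemma dotpZl a u v : dotp (a *: u) v = a * dotp u v.
Proof. by rewrite /dotp mulr_sumr; apply: eq_bigr => i _; rewrite !mxE mulrA. Qed.

Lemma dotpNl u v : dotp (- u) v = - dotp u v.
Proof. by rewrite -scaleN1r dotpZl mulN1r. Qed.

Lemma dotpBl u v w : dotp (u - v) w = dotp u w - dotp v w.
Proof. by rewrite dotpDl dotpNl. Qed.

Lemma dotpDr u v w : dotp w (u + v) = dotp w u + dotp w v.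
Proof. by rewrite dotpC dotpDl !(dotpC w). Qed.
Lemma dotpZr a u v : dotp v (a *: u) = a * dotp v u.
Proof. by rewrite dotpC dotpZl dotpC. Qed.
Lemma dotpBr u v w : dotp w (u - v) = dotp w u - dotp w v.
Proof. by rewrite dotpC dotpBl !(dotpC w). Qed.

Lemma dotp_ge0 u : 0 <= dotp u u.
Proof. by apply: sumr_ge0 => i _; rewrite -expr2 sqr_ge0. Qed.

Lemma dotp_gt0 u : u != 0 -> 0 < dotp u u.
Proof.
move=> u0.
have [i ui] : exists i, u 0 i != 0.
  apply/existsP; apply: contraR u0 => /existsPn H; apply/eqP/rowP => i.
  by rewrite mxE; move: (H i); rewrite negbK => /eqP.
rewrite /dotp (bigD1 i) //= ltr_wpDr //.
  by apply: sumr_ge0 => j _; rewrite -expr2 sqr_ge0.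
by rewrite -expr2 lt_neqAle sqr_ge0 andbT eq_sym sqrf_eq0.
Qed.

Lemma enorm_ge0 u : 0 <= enorm u.
Proof. exact: sqrtr_ge0. Qed.

Lemma enorm_sq u : enorm u ^+ 2 = dotp u u.
Proof. by rewrite /enorm sqr_sqrtr // dotp_ge0. Qed.

Lemma enormZ a u : enorm (a *: u) = `|a| * enorm u.
Proof.
by rewrite /enorm dotpZl dotpZr mulrA -expr2 sqrtrM ?sqr_ge0 // sqrtr_sqr.
Qed.

Lemma enorm_gt0 u : u != 0 -> 0 < enorm u.
Proof. by move=> /dotp_gt0 h; rewrite /enorm sqrtr_gt0. Qed.
Lemma dotp_subZ (a b : 'rV[R]_d) (t : R) :
  dotp (a - t *: b) (a - t *: b) = dotp a a - 2 * t * dotp a b + t ^+ 2 * dotp b b.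
Proof.
rewrite dotpBl !dotpBr !dotpZl !dotpZr (dotpC b a); ring.
Qed.
End Dot.


Section Conv.
Variables (R : realType) (d : nat) (g : 'rV[R]_d -> R).
Hypothesis gc : convex_fun g.

Lemma conv_seg a b {t : R} : 0 <= t -> t <= 1 ->
  g (a + t *: (b - a)) <= g a + t * (g b - g a).
Proof.
move=> t0 t1.
have -> : a + t *: (b - a) = t *: b + (1 - t) *: a.
  by rewrite scalerBr scalerBl scale1r addrCA.
apply: (le_trans (@gc b a t t0 t1)); lra.
Qed.

Lemma seg_below a b c : g a < c ->
  exists t, 0 < t <= 1 /\ g (a + t *: (b - a)) < c.
Proof.
move=> ac; set k := c - g a; set D := `|g b - g a|.
have k0 : 0 < k by rewrite subr_gt0.
have D0 : 0 <= D by rewrite /D normr_ge0.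
have kD : 0 < k + 2 * D by lra.
exists (k / (k + 2 * D)); split.
  apply/andP; split; first exact: divr_gt0.
  by rewrite ler_pdivrMr // mul1r; lra.
have t0 : 0 <= k / (k + 2 * D) by rewrite divr_ge0 // ltW.
have t1 : k / (k + 2 * D) <= 1 by rewrite ler_pdivrMr // mul1r; lra.
have h := conv_seg a b t0 t1. move: h.
have : k / (k + 2 * D) * (g b - g a) <= k / (k + 2 * D) * D.
  by rewrite ler_wpM2l ?divr_ge0 ?(ltW k0) ?(ltW kD) // ler_norm.
have : k / (k + 2 * D) * D < k.
  rewrite mulrAC ltr_pdivrMr //.
  have : 0 <= k * D by rewrite mulr_ge0 // ltW.
  nra.
rewrite /k; lra.
Qed.

Definition Cc w e := `|g (w + e) - g w| + `|g (w - e) - g w|.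

Lemma Cc_ge0 w e : 0 <= Cc w e.
Proof. by rewrite addr_ge0. Qed.

Lemma one_dim w e s : `|s| <= 1 -> g (w + s *: e) <= g w + `|s| * Cc w e.
Proof.
move=> s1; have [s0|s0] := leP 0 s.
  have := conv_seg w (w + e) s0 (le_trans (ler_norm _) s1).
  have -> : w + e - w = e by rewrite addrC addKr.
  move=> h; apply: le_trans h _.
  rewrite ger0_norm // lerD2l ler_wpM2l // /Cc.
  apply: le_trans (ler_norm _) _; rewrite lerDl //.
have ns0 : 0 <= - s by lra.
have ns1 : - s <= 1 by move: s1; rewrite ltr0_norm.
have := conv_seg w (w - e) ns0 ns1.
have -> : w - e - w = - e by rewrite addrC addKr.
rewrite scalerN scaleNr opprK => h; apply: le_trans h _.
rewrite ltr0_norm // lerD2l ler_wpM2l // /Cc.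
apply: le_trans (ler_norm _) _; rewrite lerDr //.
Qed.

End Conv.


Section Avg.
Variables (R : realType) (d : nat) (g : 'rV[R]_d -> R).
Hypothesis gc : convex_fun g.

Lemma avg_le n (p : 'I_n.+1 -> 'rV[R]_d) M : (forall i, g (p i) <= M) ->
  g (n.+1%:R^-1 *: \sum_(i < n.+1) p i) <= M.
Proof.
elim: n p => [|n IH] p H.
  by rewrite big_ord1 invr1 scale1r; exact: H.
rewrite big_ord_recr /=.
set S := \sum_(i < n.+1) _.
set t : R := n.+1%:R / n.+2%:R.
have n2 : n.+2%:R != 0 :> R by rewrite pnatr_eq0.
have n1 : n.+1%:R != 0 :> R by rewrite pnatr_eq0.
have e1 : t * n.+1%:R^-1 = n.+2%:R^-1 by rewrite /t mulrAC divff // mul1r.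
have e2 : 1 - t = n.+2%:R^-1.
  move: n2; rewrite /t [n.+2%:R]mulrSr => n2; field; apply/negP => /eqP h; have : (0:R) <= n%:R := ler0n _ _; lra.
have -> : n.+2%:R^-1 *: (S + p ord_max) = t *: (n.+1%:R^-1 *: S) + (1 - t) *: p ord_max.
  by rewrite scalerA e1 e2 scalerDr.
have t0 : 0 <= t by rewrite divr_ge0 // ler0n.
have t1 : t <= 1 by rewrite ler_pdivrMr ?ltr0n // mul1r ler_nat.
apply: (le_trans (@gc _ _ t t0 t1)).
have h1 := IH (fun i => p (widen_ord (leqnSn n.+1) i)) (fun i => H _).
have h2 := H ord_max.
have : t * g (n.+1%:R^-1 *: S) <= t * M by rewrite ler_wpM2l.
have : (1 - t) * g (p ord_max) <= (1 - t) * M by rewrite ler_wpM2l // subr_ge0.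
lra.
Qed.
End Avg.


Section Key.
Variables (R : realType) (d : nat) (g : 'rV[R]_d -> R).
Hypothesis gc : convex_fun g.
Variables (eps sigma : R) (x w : 'rV[R]_d).
Hypothesis sigma0 : 0 < sigma.
Hypothesis A4 : forall y s, g y = - eps -> subgrad g y s -> sigma <= enorm s.
Hypothesis gw : g w <= - eps.
Hypothesis wmin : forall z, g z <= - eps -> dotp (x - w) (x - w) <= dotp (x - z) (x - z).
Hypothesis gx : - eps < g x.

Let u := x - w.

Lemma u_neq0 : u != 0.
Proof.
apply/negP => /eqP u0; have : x = w by apply/eqP; rewrite -subr_eq0 -/u u0.
move=> xw; have := gx; rewrite xw; have := gw; lra.
Qed.

Lemma uu0 : 0 < dotp u u.
Proof. exact: dotp_gt0 u_neq0. Qed.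

Lemma proj_ineq z : g z <= - eps -> dotp u (z - w) <= 0.
Proof.
move=> gz; set v := z - w.
rewrite leNgt; apply/negP => uv.
have vv := dotp_ge0 v.
set t := Num.min 1 (dotp u v / (dotp v v + 1)).
have t0 : 0 < t by rewrite lt_min ltr01 divr_gt0 //; lra.
have t1 : t <= 1 by rewrite ge_min lexx.
have tv : t * (dotp v v + 1) <= dotp u v.
  by rewrite -ler_pdivlMr ?ge_min ?lexx ?orbT //; lra.
have gzt : g (w + t *: v) <= - eps.
  apply: le_trans (conv_seg gc w z (ltW t0) t1) _.
  have : 0 <= t * (- eps - g z) by rewrite mulr_ge0 //; lra.
  have : 0 <= (1 - t) * (- eps - g w) by rewrite mulr_ge0 //; have := gw; lra.
  lra.
have := wmin gzt.
have -> : x - (w + t *: v) = u - t *: v by rewrite opprD addrA.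
rewrite (dotp_subZ u v t).
nra.
Qed.

Lemma gw_eq : g w = - eps.
Proof.
apply/eqP; rewrite eq_le gw /=; rewrite leNgt; apply/negP => lt.
have [t [/andP [t0 t1] ht]] := seg_below gc x lt.
have := proj_ineq (ltW ht).
rewrite addrC addKr -/u dotpZr.
have := uu0; nra.
Qed.

Lemma H0 z : 0 <= dotp u (z - w) -> - eps <= g z.
Proof.
move=> h; rewrite leNgt; apply/negP => lt.
have [t [/andP [t0 t1] ht]] := seg_below gc (z + u) lt.
have := proj_ineq (ltW ht).
have -> : z + t *: (z + u - z) - w = (z - w) + t *: u.
  by rewrite (addrC z u) addrK addrAC.
rewrite dotpDr dotpZr.
have := uu0; nra.
Qed.

Let S := [set r | exists z, 0 < dotp u (z - w) /\ r = (g z + eps) / dotp u (z - w)].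

Lemma S_lb : has_lbound S.
Proof.
exists 0 => r [z [bz ->]]; rewrite divr_ge0 ?(ltW bz) //.
have := H0 (ltW bz); lra.
Qed.

Lemma S_ne : nonempty S.
Proof. by exists ((g x + eps) / dotp u (x - w)); exists x; split => //; exact: uu0. Qed.

Let lam := inf S.

Lemma lam_sub : subgrad g w (lam *: u).
Proof.
move=> y; rewrite gw_eq dotpZl; set a := dotp u (y - w).
have [a0|a0|a0] := ltgtP a 0; last first.
- by rewrite a0 mulr0 addr0; apply: H0; rewrite -/a a0.
- have : lam <= (g y + eps) / a.
    by apply: ge_inf; [exact: S_lb | exists y; split].
  rewrite ler_pdivlMr // => h; lra.
have : (g y + eps) / a <= lam.
  apply: lb_le_inf; first exact: S_ne.
  move=> r [z [bz ->]]; set b := dotp u (z - w) in bz *.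
  set t := a / (a - b).
  have t0 : 0 <= t by rewrite /t ler_ndivlMr ?mul0r; lra.
  have t1 : t <= 1 by rewrite /t ler_ndivrMr; lra.
  have hp := conv_seg gc y z t0 t1.
  have hd : dotp u (y + t *: (z - y) - w) = 0.
    have -> : y + t *: (z - y) - w = (y - w) + t *: ((z - w) - (y - w)).
      by rewrite opprB addrA subrK addrAC.
    have hab : a - b != 0 by rewrite ltr0_neq0 // subr_lt0; lra.
    rewrite dotpDr dotpZr (dotpBr (z - w) (y - w)) -/a -/b /t; field => //.
  have hq : - eps <= g (y + t *: (z - y)) by apply: H0; rewrite hd.
  have hab : a - b != 0 by rewrite ltr0_neq0 // subr_lt0; lra.
  have ht : t * (a - b) = a by rewrite /t divfK.
  set Y := g y + eps; set Z := g z + eps.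
  have hY : Y = Y / a * a by rewrite divfK // ltr0_neq0.
  have hZ : Z = Z / b * b by rewrite divfK // gt_eqF.
  have key : 0 <= Y + t * (Z - Y) by rewrite /Y /Z; lra.
  have k1 : 0 <= (b - a) * (Y + t * (Z - Y)) by rewrite mulr_ge0 //; lra.
  have e : (b - a) * (Y + t * (Z - Y)) = b * Y - a * Z by rewrite /t; field.
  rewrite e in k1.
  move: k1; rewrite {1}hY {1}hZ; set al := Y / a; set be := Z / b => k1.
  have ab0 : a * b < 0 by rewrite nmulr_rlt0.
  nra.
move=> h.
have : (g y + eps) / a * a = g y + eps by rewrite divfK // ltr0_neq0.
nra.
Qed.


Lemma key_bound : enorm (x - w) <= (g x + eps) / sigma.
Proof.
have hs := A4 gw_eq lam_sub.
have l0 : 0 <= lam.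
  apply: lb_le_inf; first exact: S_ne.
  move=> r [z [bz ->]]; rewrite divr_ge0 ?(ltW bz) //; have := H0 (ltW bz); lra.
rewrite enormZ ger0_norm // in hs.
have hl : lam <= (g x + eps) / dotp u u.
  by apply: ge_inf; [exact: S_lb | exists x; split => //; exact: uu0].
have e0 : 0 < enorm u by apply: enorm_gt0; exact: u_neq0.
rewrite -enorm_sq in hl.
rewrite -/u ler_pdivlMr //.
have : lam * enorm u <= (g x + eps) / enorm u ^+ 2 * enorm u by rewrite ler_wpM2r // ltW.
rewrite expr2 invfM mulrA mulfVK ?gt_eqF // => h2.
have h3 := le_trans hs h2.
have := ler_wpM2r (ltW e0) h3.
rewrite mulfVK ?gt_eqF // => h4.
rewrite mulrC; exact: h4.
Qed.
End Key.

Module Topo.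

Section Cont.
Variables (R : realType) (n : nat) (g : 'rV[R]_n.+1 -> R).
Hypothesis gc : convex_fun g.
Variable w : 'rV[R]_n.+1.

Let C := \sum_(i < n.+1) Cc g w (delta_mx 0 i).

Lemma C_ge0 : 0 <= C.
Proof. by apply: sumr_ge0 => i _; exact: Cc_ge0. Qed.

Lemma Cc_le_C i : Cc g w (delta_mx 0 i) <= C.
Proof.
rewrite /C (bigD1 i) //= lerDl; apply: sumr_ge0 => j _; exact: Cc_ge0.
Qed.

Lemma upper (v : 'rV[R]_n.+1) (r : R) : (forall i, `|v 0 i| <= r) -> n.+1%:R * r <= 1 ->
  g (w + v) <= g w + n.+1%:R * r * C.
Proof.
move=> vr dr.
have nz : n.+1%:R != 0 :> R by rewrite pnatr_eq0.
have -> : w + v = n.+1%:R^-1 *: \sum_(i < n.+1) (w + (n.+1%:R * v 0 i) *: delta_mx 0 i).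
  rewrite big_split /= sumr_const card_ord -scaler_nat.
  under eq_bigr do rewrite -scalerA.
  rewrite -scaler_sumr -row_sum_delta -scalerDr scalerA mulVf // scale1r //.
apply: avg_le => // i.
have r0 : 0 <= r by apply: le_trans (vr i); exact: normr_ge0.
have hi : `|n.+1%:R * v 0 i| <= 1.
  by rewrite normrM ger0_norm ?ler0n //; apply: le_trans dr; rewrite ler_wpM2l ?ler0n.
apply: (le_trans (one_dim gc _ _ hi)); rewrite lerD2l.
rewrite normrM ger0_norm ?ler0n //.
apply: ler_pM => //; first by rewrite mulr_ge0 ?ler0n.
  exact: Cc_ge0.
  by rewrite ler_wpM2l ?ler0n.
exact: Cc_le_C.
Qed.

Lemma lower (v : 'rV[R]_n.+1) (r : R) : (forall i, `|v 0 i| <= r) -> n.+1%:R * r <= 1 ->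
  g w - n.+1%:R * r * C <= g (w + v).
Proof.
move=> vr dr.
have h1 : g (w + - v) <= g w + n.+1%:R * r * C.
  by apply: upper => // i; rewrite mxE normrN.
have h0 : (0:R) <= 2^-1 by rewrite invr_ge0.
have h0' : (2^-1 : R) <= 1 by rewrite invf_le1 // ler1n.
have := @gc (w + v) (w - v) _ h0 h0'.
have -> : 2^-1 *: (w + v) + (1 - 2^-1) *: (w - v) = w.
  have -> : 1 - 2^-1 = 2^-1 :> R by field.
  by rewrite -scalerDr addrACA subrr addr0 -mulr2n -scaler_nat scalerA mulVf ?pnatr_eq0 // scale1r.
have -> : 1 - 2^-1 = 2^-1 :> R by field.
lra.
Qed.

Import numFieldTopology.Exports numFieldNormedType.Exports.
Lemma cont_at : {for w, continuous g}.
Proof.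
move=> A /= /nbhs_ballP [e /= e0 eA].
set m := Num.min 1 (e / (C + 1)).
have C0 := C_ge0.
have m0 : 0 < m by rewrite lt_min ltr01 divr_gt0 //; lra.
have m1 : m <= 1 by rewrite ge_min lexx.
have me : m * (C + 1) <= e.
  by rewrite -ler_pdivlMr ?ge_min ?lexx ?orbT //; lra.
have nz : 0 < n.+1%:R :> R by rewrite ltr0n.
set r := m / n.+1%:R.
have r0 : 0 < r by rewrite divr_gt0.
have dr : n.+1%:R * r = m by rewrite /r mulrC mulfVK // gt_eqF.
apply/nbhs_ballP; exists r => //= z [_ wz].
have vr : forall i, `|(z - w) 0 i| <= r.
  move=> i; have := wz 0 i; rewrite /ball /= !mxE distrC; exact: ltW.
have := upper vr; have := lower vr.
have -> : w + (z - w) = z by rewrite addrC subrK.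
rewrite dr => /(_ m1) h1 /(_ m1) h2.
rewrite /preimage /=; apply: eA; rewrite /ball /=.
rewrite ltr_distlC; apply/andP; split; nra.
Qed.
End Cont.

Import numFieldTopology.Exports numFieldNormedType.Exports.
Lemma conv_cont (R : realType) d (g : 'rV[R]_d -> R) : convex_fun g -> continuous g.
Proof.
case: d g => [|n] g gc; last by move=> w; exact: cont_at.
move=> w A /= /nbhs_ballP [e e0 eA]; apply/nbhs_ballP; exists 1 => //= z _.
have -> : z = w by rewrite (thinmx0 z) (thinmx0 w).
rewrite /preimage /=; apply: eA; exact: ballxx.
Qed.


Lemma q_convex (R : realType) d (x : 'rV[R]_d) :
  convex_fun (fun z => dotp (x - z) (x - z)).
Proof.
move=> a b t t0 t1; rewrite /dotp !mulr_sumr -big_split /=.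
apply: ler_sum => i _; rewrite !mxE.
set A := x 0 i - a 0 i; set B := x 0 i - b 0 i.
have -> : x 0 i - (t * a 0 i + (1 - t) * b 0 i) = t * A + (1 - t) * B.
  by rewrite /A /B; ring.
have : 0 <= t * (1 - t) by rewrite mulr_ge0 // subr_ge0.
have : 0 <= (A - B) * (A - B) by rewrite -expr2 sqr_ge0.
nra.
Qed.

Lemma coord_le_dotp (R : realType) d (u : 'rV[R]_d) i : u 0 i * u 0 i <= dotp u u.
Proof.
rewrite /dotp (bigD1 i) //= lerDl; apply: sumr_ge0 => j _; rewrite -expr2 sqr_ge0 //.
Qed.

Import numFieldTopology.Exports numFieldNormedType.Exports.

Lemma exists_min (R : realType) d (g : 'rV[R]_d -> R) (x x0 : 'rV[R]_d) (c : R) :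
  convex_fun g -> g x0 <= c -> exists w, g w <= c /\
  forall z, g z <= c -> dotp (x - w) (x - w) <= dotp (x - z) (x - z).
Proof.
move=> gc x0c.
set q := fun z => dotp (x - z) (x - z).
have gC := conv_cont gc.
have qC := conv_cont (q_convex x).
set Q := q x0.
set A := [set z | g z <= c /\ q z <= Q].
have Acl : closed A.
  have -> : A = g @^-1` [set r | r <= c] `&` q @^-1` [set r | r <= Q] by [].
  apply: closedI; apply: preimage_closed; try exact: closed_le.
    by move=> z _; exact: gC.
  by move=> z _; exact: qC.
have Aco : compact A.
  apply: (subclosed_compact Acl
    (rV_compact (A := fun i => `[x 0 i - (Q + 1), x 0 i + (Q + 1)]%classic) _)).
    by move=> i; exact: segment_compact.
  move=> z [_ qz] i /=; rewrite in_itv /=.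
  have h := coord_le_dotp (x - z) i; rewrite !mxE in h.
  have hQ : (x 0 i - z 0 i) * (x 0 i - z 0 i) <= Q by apply: le_trans h qz.
  have Q0 : 0 <= Q by apply: le_trans hQ; rewrite -expr2 sqr_ge0.
  apply/andP; split; nra.
have A0 : A !=set0 by exists x0; split => //.
have [w /set_mem [wc wQ] wmin] := EVT_min_rV A0 Aco (continuous_subspaceT (A:=A) qC).
exists w; split => // z zc.
have [zQ|zQ] := leP (q z) Q.
  by apply: wmin; apply/mem_set; split.
by apply: le_trans wQ (ltW zQ).
Qed.

End Topo.

Lemma enorm0 (R : realType) d : enorm (0 : 'rV[R]_d) = 0.
Proof.
rewrite /enorm /dotp big1 ?sqrtr0 // => i _; rewrite mxE mul0r //.
Qed.

Lemma dist_le (R : realType) d (x y : 'rV[R]_d) (Y : set 'rV[R]_d) :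
  Y y -> dist x Y <= enorm (x - y).
Proof.
move=> Yy; apply: ge_inf; last by exists y.
by exists 0 => r [z _ <-]; exact: enorm_ge0.
Qed.

Local Close Scope classical_set_scope.
Local Open Scope ring_scope.
Unset Implicit Arguments.
Theorem lemma1 (R : realType) (d : nat) (g : 'rV[R]_d -> R) (Rad : R)
  (Gg sigma eps rho : R) :
  convex_fun g ->
  0 < Rad ->
  (forall x, g x <= 0 -> enorm x <= Rad) ->
  (* (A3) *)
  0 < Gg ->
  (forall x s, enorm x <= Rad -> subgrad g x s -> enorm s <= Gg) ->
  (* (A4) *)
  0 < sigma -> 0 < eps ->
  (exists x, g x = - eps) ->
  (forall x s, g x = - eps -> subgrad g x s -> sigma <= enorm s) ->
  0 <= rho -> rho <= eps ->
  forall x : 'rV[R]_d, enorm x <= Rad ->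
    dist x (sublevel g rho) <= sigma^-1 * Num.max (g x + rho) 0.
Proof.
move=> gc _ _ _ _ s0 e0 [x0 gx0] A4 r0 re x _.
have [gxr|gxr] := leP (g x) (- rho).
  have h := @dist_le _ _ x x (sublevel g rho) gxr.
  apply: le_trans h _.
  rewrite subrr enorm0; apply: mulr_ge0; first by rewrite invr_ge0 ltW.
  by rewrite le_max lexx orbT.
have gxe : - eps < g x by lra.
have h0 : g x0 <= - eps by rewrite gx0.
have [w [gw wmin]] := Topo.exists_min x gc h0.
have kb := key_bound gc s0 A4 gw wmin gxe.
set t := (g x + rho) / (g x + eps).
have ge0 : 0 < g x + eps by lra.
have t0 : 0 <= t by rewrite divr_ge0 //; lra.
have t1 : t <= 1 by rewrite ler_pdivrMr // mul1r; lra.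
set p := x + t *: (w - x).
have gp : g p <= - rho.
  apply: le_trans (conv_seg gc x w t0 t1) _.
  have : t * (g w - g x) <= t * (- eps - g x) by rewrite ler_wpM2l //; lra.
  have : t * (- eps - g x) = - (g x + rho).
    by rewrite /t; field; rewrite gt_eqF.
  lra.
have hp := @dist_le _ _ x p (sublevel g rho) gp.
apply: le_trans hp _.
have -> : x - p = t *: (x - w) by rewrite /p opprD addNKr -scalerN opprB.
rewrite enormZ ger0_norm //.
have -> : Num.max (g x + rho) 0 = g x + rho by apply/max_idPl; lra.
apply: le_trans (ler_wpM2l t0 kb) _.
by rewrite /t mulrA divfK ?gt_eqF // mulrC.
Qed.
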